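(* (1) Invariance: if $t\to_w u$ then $t\equiv_S u$. (2) Compatibility: if $t\equiv_S u$ then $C\langle t\rangle\equiv_S C\langle u\rangle$ for every context $C$.
   Context: Terms: $t ::= x \mid \lambda x.t \mid t\,u \mid t[x\backslash u]$ ($t[x\backslash u]$ an explicit substitution binding $x$ in $t$; terms up to $\alpha$). Values $v ::= \lambda x.t$. Substitution contexts $S ::= \langle\cdot\rangle\mid S[x\backslash u]$. Weak contexts $W ::= \langle\cdot\rangle \mid W\,t \mid t\,W \mid t[x\backslash W] \mid W[x\backslash u]$; $W\langle\langle t\rangle\rangle$ is plugging without capture of free variables of $t$. Root rules: $S\langle\lambda x.t\rangle u\mapsto_m S\langle t[x\backslash u]\rangle$; $W\langle\langle x\rangle\rangle[x\backslash u]\mapsto_e W\langle\langle u\rangle\rangle[x\backslash u]$; $t[x\backslash S\langle v\rangle]\mapsto_{gcv} S\langle t\rangle$ if $x\notin\mathrm{fv}(t)$. $\to_w$ is the union of their closures under weak contexts. A context $C$ is a term with exactly one hole anywhere. Contextual equivalence $\equiv_S$: $t\equiv_S u$ iff for every context $C$ such that $C\langle t\rangle$ and $C\langle u\rangle$ are closed, $C\langle t\rangle$ is weakly $\to_w$-normalizing iff $C\langle u\rangle$ is. *)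

(* Defs.v *)
(* Lambda calculus with explicit substitutions (the weak
   value substitution calculus), terms in de Bruijn notation (= terms up to alpha). *)
From Stdlib Require Import Arith List Relations.

(* t ::= x | \x.t | t u | t[x\u]  ;  [ES t u] is t[x\u], binding index 0 in t. *)
Inductive term : Type :=
| Var : nat -> term
| Lam : term -> term
| App : term -> term -> term
| ES  : term -> term -> term.

Fixpoint lift (c k : nat) (t : term) : term :=
  match t with
  | Var n => if c <=? n then Var (n + k) else Var n
  | Lam t => Lam (lift (S c) k t)
  | App t u => App (lift c k t) (lift c k u)
  | ES t u => ES (lift (S c) k t) (lift c k u)
  end.

(* decrement every free index > c (used when index c does not occur free) *)
Fixpoint lower (c : nat) (t : term) : term :=
  match t with
  | Var n => if c <? n then Var (n - 1) else Var n
  | Lam t => Lam (lower (S c) t)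
  | App t u => App (lower c t) (lower c u)
  | ES t u => ES (lower (S c) t) (lower c u)
  end.

Fixpoint free (n : nat) (t : term) : bool :=
  match t with
  | Var m => Nat.eqb m n
  | Lam t => free (S n) t
  | App t u => free n t || free n u
  | ES t u => free (S n) t || free n u
  end.

Fixpoint scoped (n : nat) (t : term) : bool :=
  match t with
  | Var m => m <? n
  | Lam t => scoped (S n) t
  | App t u => scoped n t && scoped n u
  | ES t u => scoped (S n) t && scoped n u
  end.

Definition closed (t : term) : Prop := scoped 0 t = true.

Definition is_value (t : term) : Prop := exists b, t = Lam b.

(* substitution contexts S ::= <.> | S[x\u]; head of the list is outermost *)
Definition sctx := list term.
Fixpoint plug_s (s : sctx) (t : term) : term :=
  match s with
  | nil => t
  | u :: s' => ES (plug_s s' t) u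
  end.

(* weak contexts W ::= <.> | W t | t W | t[x\W] | W[x\u] *)
Inductive wctx : Type :=
| WHole : wctx
| WAppL : wctx -> term -> wctx
| WAppR : term -> wctx -> wctx
| WESR  : term -> wctx -> wctx
| WESL  : wctx -> term -> wctx.

(* plugging (may capture) *)
Fixpoint plug_w (W : wctx) (t : term) : term :=
  match W with
  | WHole => t
  | WAppL W u => App (plug_w W t) u
  | WAppR u W => App u (plug_w W t)
  | WESR u W => ES u (plug_w W t)
  | WESL W u => ES (plug_w W t) u
  end.

(* number of binders the hole of W lies under *)
Fixpoint wdepth (W : wctx) : nat :=
  match W with
  | WHole => 0
  | WAppL W _ | WAppR _ W | WESR _ W => wdepth W
  | WESL W _ => S (wdepth W)
  end.

Inductive root_step : term -> term -> Prop :=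
| R_m : forall (s : sctx) t u,
    root_step (App (plug_s s (Lam t)) u)
              (plug_s s (ES t (lift 0 (length s) u)))
| R_e : forall (W : wctx) u,
    (* W<<x>>[x\u] -> W<<u>>[x\u], x the variable bound by the outer ES,
       plugged without capture *)
    root_step (ES (plug_w W (Var (wdepth W))) u)
              (ES (plug_w W (lift 0 (S (wdepth W)) u)) u)
| R_gcv : forall t (s : sctx) v,
    is_value v -> free 0 t = false ->
    root_step (ES t (plug_s s v))
              (plug_s s (lift 0 (length s) (lower 0 t))).

Definition wstep (t u : term) : Prop :=
  exists (W : wctx) r r', root_step r r' /\ t = plug_w W r /\ u = plug_w W r'.

Definition wnormal (t : term) : Prop := forall u, ~ wstep t u.

Definition weakly_normalizing (t : term) : Prop :=
  exists u, clos_refl_trans term wstep t u /\ wnormal u.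

Inductive ctx : Type :=
| CHole : ctx
| CLam  : ctx -> ctx
| CAppL : ctx -> term -> ctx
| CAppR : term -> ctx -> ctx
| CESL  : ctx -> term -> ctx
| CESR  : term -> ctx -> ctx.

(* plugging with capture *)
Fixpoint plug (C : ctx) (t : term) : term :=
  match C with
  | CHole => t
  | CLam C => Lam (plug C t)
  | CAppL C u => App (plug C t) u
  | CAppR u C => App u (plug C t)
  | CESL C u => ES (plug C t) u
  | CESR u C => ES u (plug C t)
  end.

Definition ctx_equiv (t u : term) : Prop :=
  forall C : ctx, closed (plug C t) -> closed (plug C u) ->
    (weakly_normalizing (plug C t) <-> weakly_normalizing (plug C u)).

(* Main.v *)
Require Import Defs.
From Stdlib Require Import Arith List Relations Lia Permutation Setoid Morphisms ClassicalEpsilon Classical.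
Import ListNotations.

Lemma lift_0 : forall t c, lift c 0 t = t.
Proof.
  induction t; intros c; simpl; try rewrite IHt; try rewrite IHt1; try rewrite IHt2; auto.
  destruct (c <=? n); f_equal; lia.
Qed.

Lemma lift_lift : forall t c j k, lift c k (lift c j t) = lift c (j + k) t.
Proof.
  induction t; intros c j k; simpl; try rewrite IHt; try rewrite IHt1; try rewrite IHt2; auto.
  destruct (Nat.leb_spec c n); simpl.
  - destruct (Nat.leb_spec c (n + j)); [f_equal; lia | lia].
  - destruct (Nat.leb_spec c n); [lia | auto].
Qed.

Lemma lift_lower : forall t c, free c t = false -> lift c 1 (lower c t) = t.
Proof.
  induction t; intros c H; simpl in *.
  - destruct (Nat.ltb_spec c n); simpl.
    + destruct (Nat.leb_spec c (n - 1)); [f_equal; lia | lia].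
    + destruct (Nat.leb_spec c n); [ apply Nat.eqb_neq in H; lia | auto].
  - rewrite IHt; auto.
  - apply Bool.orb_false_iff in H as [H1 H2]. rewrite IHt1, IHt2; auto.
  - apply Bool.orb_false_iff in H as [H1 H2]. rewrite IHt1, IHt2; auto.
Qed.

Inductive ty : Type := O : ty | Arr : list ty -> ty -> ty.

Definition tyd : forall a b : ty, {a = b} + {a <> b} :=
  fun a b => excluded_middle_informative (a = b).
Definition cnt (B : ty) (l : list ty) : nat := count_occ tyd l B.
Lemma cnt_app : forall B l l', cnt B (l ++ l') = cnt B l + cnt B l'.
Proof. intros; unfold cnt; apply count_occ_app. Qed.
Lemma cnt_nil : forall B, cnt B [] = 0.
Proof. reflexivity. Qed.

Definition env := nat -> list ty.
Definition empty : env := fun _ => [].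
Definition sum (G D : env) : env := fun i => G i ++ D i.
Definition scons (M : list ty) (G : env) : env :=
  fun i => match i with 0 => M | S j => G j end.
Definition etl (G : env) : env := fun i => G (S i).
Definition single (n : nat) (L : list ty) : env :=
  fun i => if Nat.eqb i n then L else [].
Definition ins (c k : nat) (G : env) : env :=
  fun i => if i <? c then G i else if i <? c + k then [] else G (i - k).

Definition meq (l l' : list ty) := forall B, cnt B l = cnt B l'.
Definition eqv (G D : env) := forall i, meq (G i) (D i).

Lemma meq_perm : forall l l', meq l l' -> Permutation l l'.
Proof. intros l l' H. apply (Permutation_count_occ tyd). exact H. Qed.

Ltac envsimp := unfold meq, sum, scons, empty, etl, ins in *;
  repeat rewrite cnt_app in *; repeat rewrite cnt_nil in *.

Ltac inst i B := repeat match goal with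
  | H : eqv _ _ |- _ =>
      pose proof (H i B); pose proof (H (S i) B); pose proof (H 0 B); clear H
  end.
Ltac envfin := envsimp; simpl in *; repeat rewrite cnt_app in *; repeat rewrite cnt_nil in *; try lia.
Ltac envsolve :=
  let i := fresh "i" in let B := fresh "B" in
  intros i B; destruct i as [|i]; [inst 0 B | inst i B]; envfin.

Lemma eqv_refl : forall G, eqv G G. Proof. intros G i B; reflexivity. Qed.
Lemma eqv_sym : forall G D, eqv G D -> eqv D G. Proof. intros G D H i B; symmetry; apply H. Qed.
Lemma eqv_trans : forall G D E, eqv G D -> eqv D E -> eqv G E.
Proof. intros G D E H1 H2 i B; rewrite H1; apply H2. Qed.

Inductive tyj : env -> term -> ty -> nat -> Prop :=
| TVar : forall G n A, eqv G (single n [A]) -> tyj G (Var n) A 1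
| TLamO : forall G b, eqv G empty -> tyj G (Lam b) O 1
| TLam : forall G b M A k, tyj (scons M G) b A k -> tyj G (Lam b) (Arr M A) (S k)
| TApp : forall G G1 G2 t u M A k1 k2,
    tyj G1 t (Arr M A) k1 -> tys G2 u (O :: M) k2 -> eqv G (sum G1 G2) ->
    tyj G (App t u) A (S (k1 + k2))
| TES : forall G G1 G2 t u M A k1 k2,
    tyj (scons M G1) t A k1 -> tys G2 u (O :: M) k2 -> eqv G (sum G1 G2) ->
    tyj G (ES t u) A (S (k1 + k2))
with tys : env -> term -> list ty -> nat -> Prop :=
| TSnil : forall G u, eqv G empty -> tys G u [] 0
| TScons : forall G G1 G2 u B L n1 n2,
    tyj G1 u B n1 -> tys G2 u L n2 -> eqv G (sum G1 G2) -> tys G u (B :: L) (n1 + n2).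

Lemma tyj_pos : forall G t A n, tyj G t A n -> 1 <= n.
Proof. intros G t A n H; inversion H; lia. Qed.

Lemma tys_nil_inv : forall G u n, tys G u [] n -> eqv G empty /\ n = 0.
Proof. intros G u n H; inversion H; subst; auto. Qed.
Lemma tys_cons_inv : forall G u B L n, tys G u (B :: L) n ->
  exists G1 G2 n1 n2, tyj G1 u B n1 /\ tys G2 u L n2 /\ eqv G (sum G1 G2) /\ n = n1 + n2.
Proof. intros G u B L n H; inversion H; subst; eauto 10. Qed.
Lemma ty_var_inv : forall G m A n, tyj G (Var m) A n -> eqv G (single m [A]) /\ n = 1.
Proof. intros G m A n H; inversion H; subst; auto. Qed.
Lemma ty_lam_inv : forall G b A n, tyj G (Lam b) A n ->
  (A = O /\ eqv G empty /\ n = 1) \/ (exists M B k, A = Arr M B /\ tyj (scons M G) b B k /\ n = S k).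
Proof. intros G b A n H; inversion H; subst; eauto 10. Qed.
Lemma ty_app_inv : forall G t u A n, tyj G (App t u) A n ->
  exists G1 G2 M k1 k2, tyj G1 t (Arr M A) k1 /\ tys G2 u (O :: M) k2 /\ eqv G (sum G1 G2) /\ n = S (k1 + k2).
Proof. intros G t u A n H; inversion H; subst; eauto 10. Qed.
Lemma ty_es_inv : forall G t u A n, tyj G (ES t u) A n ->
  exists G1 G2 M k1 k2, tyj (scons M G1) t A k1 /\ tys G2 u (O :: M) k2 /\ eqv G (sum G1 G2) /\ n = S (k1 + k2).
Proof. intros G t u A n H; inversion H; subst; eauto 10. Qed.

Lemma tyj_eqv : forall t G A n, tyj G t A n -> forall G', eqv G G' -> tyj G' t A n.
Proof.
  induction t; intros G A k H G' E; inversion H; subst.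
  - constructor. eapply eqv_trans; [apply eqv_sym, E| auto].
  - constructor. eapply eqv_trans; [apply eqv_sym, E| auto].
  - constructor. eapply IHt; [eauto|]. envsolve.
  - econstructor; eauto. eapply eqv_trans; [apply eqv_sym, E| auto].
  - econstructor; eauto. eapply eqv_trans; [apply eqv_sym, E| auto].
Qed.

Lemma tys_eqv : forall u G L n, tys G u L n -> forall G', eqv G G' -> tys G' u L n.
Proof.
  intros u G L n H G' E; inversion H; subst.
  - apply TSnil. eapply eqv_trans; [apply eqv_sym, E| auto].
  - eapply TScons; eauto. eapply eqv_trans; [apply eqv_sym, E| auto].
Qed.

Lemma tys_app : forall u L1 L2 G1 G2 n1 n2, tys G1 u L1 n1 -> tys G2 u L2 n2 ->
  tys (sum G1 G2) u (L1 ++ L2) (n1 + n2).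
Proof.
  induction L1; intros L2 G1 G2 n1 n2 H1 H2; inversion H1; subst; simpl.
  - eapply tys_eqv; eauto. envsolve.
  - rewrite <- Nat.add_assoc. eapply TScons; [eauto | eapply IHL1; eauto | envsolve].
Qed.

Lemma tys_split : forall u L1 L2 G n, tys G u (L1 ++ L2) n ->
  exists G1 G2 n1 n2, tys G1 u L1 n1 /\ tys G2 u L2 n2 /\ eqv G (sum G1 G2) /\ n = n1 + n2.
Proof.
  induction L1; intros L2 G n H; simpl in *.
  - exists empty, G, 0, n. split; [constructor; apply eqv_refl|]. split; [auto|].
    split; [envsolve|lia].
  - apply tys_cons_inv in H as (G1 & G2 & n1 & n2 & H1 & H6 & E0 & ->).
    destruct (IHL1 _ _ _ H6) as (Ga & Gb & na & nb & Ha & Hb & E & ->).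
    exists (sum G1 Ga), Gb, (n1 + na), nb. split; [eapply TScons; [eauto|eauto|apply eqv_refl]|].
    split; [auto|]. split; [envsolve|lia].
Qed.

Lemma tys_perm : forall u L L', Permutation L L' -> forall G n, tys G u L n -> tys G u L' n.
Proof.
  intros u L L' P; induction P; intros G k H; auto.
  - apply tys_cons_inv in H as (G1 & G2 & n1 & n2 & H1 & H2 & E0 & ->).
    eapply TScons; eauto.
  - apply tys_cons_inv in H as (G1 & G2 & n0 & n & H1 & H5 & E0 & ->).
    apply tys_cons_inv in H5 as (G3 & G4 & n1 & n2 & H3 & H4 & E1 & ->).
    replace (n0 + (n1 + n2)) with (n1 + (n0 + n2)) by lia.
    eapply TScons; [eauto| eapply TScons; [eauto|eauto|apply eqv_refl] | envsolve].
Qed.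

Lemma tys_meq : forall u M M' G n, meq M M' -> tys G u (O :: M) n -> tys G u (O :: M') n.
Proof. intros. eapply tys_perm; [|eauto]. apply perm_skip, meq_perm; auto. Qed.

Add Parametric Relation : env eqv
  reflexivity proved by eqv_refl symmetry proved by eqv_sym transitivity proved by eqv_trans
  as eqv_rel.
#[export] Instance sum_proper : Proper (eqv ==> eqv ==> eqv) sum.
Proof. intros a b H c d H'. envsolve. Qed.
#[export] Instance scons_proper : Proper (meq ==> eqv ==> eqv) scons.
Proof. intros a b H c d H'. intros i B. destruct i; simpl; auto. apply H'. Qed.
#[export] Instance tl_proper : Proper (eqv ==> eqv) etl.
Proof. intros a b H i B. apply H. Qed.
#[export] Instance ins_proper c k : Proper (eqv ==> eqv) (ins c k).
Proof. intros a b H i B. unfold ins. destruct (i <? c); [apply H|]. destruct (i <? c + k); [reflexivity|apply H]. Qed.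
#[export] Instance tyj_proper : Proper (eqv ==> eq ==> eq ==> eq ==> iff) tyj.
Proof. intros a b H t t' <- A A' <- n n' <-. split; intro; eapply tyj_eqv; eauto. symmetry; auto. Qed.
#[export] Instance tys_proper : Proper (eqv ==> eq ==> eq ==> eq ==> iff) tys.
Proof. intros a b H t t' <- A A' <- n n' <-. split; intro; eapply tys_eqv; eauto. symmetry; auto. Qed.

Lemma sum_comm : forall G D, eqv (sum G D) (sum D G). Proof. intros; envsolve. Qed.
Lemma sum_assoc : forall G D E, eqv (sum (sum G D) E) (sum G (sum D E)). Proof. intros; envsolve. Qed.
Lemma sum_empty_l : forall G, eqv (sum empty G) G. Proof. intros; envsolve. Qed.
Lemma sum_empty_r : forall G, eqv (sum G empty) G. Proof. intros; envsolve. Qed.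

Ltac ifs := repeat match goal with
  | |- context [?a <? ?b] => destruct (Nat.ltb_spec a b)
  | |- context [?a =? ?b] => destruct (Nat.eqb_spec a b)
  end.

Lemma ins_sum : forall c k G D, eqv (ins c k (sum G D)) (sum (ins c k G) (ins c k D)).
Proof. intros c k G D i B. unfold ins, sum. ifs; envfin. Qed.
Lemma ins_empty : forall c k, eqv (ins c k empty) empty.
Proof. intros c k i B. unfold ins, empty. ifs; reflexivity. Qed.
Lemma ins_scons : forall c k M G, eqv (ins (S c) k (scons M G)) (scons M (ins c k G)).
Proof.
  intros c k M G i B. unfold ins. destruct i; cbn [scons]; ifs; try reflexivity; try lia.
  replace (S i - k) with (S (i - k)) by lia. reflexivity.
Qed.
Lemma ins_tl : forall c k G, eqv (etl (ins (S c) k G)) (ins c k (etl G)).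
Proof.
  intros c k G i B. unfold ins, etl. ifs; try reflexivity; try lia.
  replace (S i - k) with (S (i - k)) by lia. reflexivity.
Qed.
Lemma ins_single_ge : forall c k m L, c <= m -> eqv (ins c k (single m L)) (single (m + k) L).
Proof. intros c k m L H i B. unfold ins, single. ifs; try reflexivity; try lia. Qed.
Lemma ins_single_lt : forall c k m L, m < c -> eqv (ins c k (single m L)) (single m L).
Proof. intros c k m L H i B. unfold ins, single. ifs; try reflexivity; try lia. Qed.
Lemma scons_tl : forall M G, meq M (G 0) -> eqv (scons M (etl G)) G.
Proof. intros M G H i B; destruct i; simpl; [apply H|reflexivity]. Qed.
Lemma tl_scons : forall M G, eqv (etl (scons M G)) G.
Proof. intros; intros i B; reflexivity. Qed.
Lemma tl_sum : forall G D, eqv (etl (sum G D)) (sum (etl G) (etl D)).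
Proof. intros; intros i B; reflexivity. Qed.

Lemma tys_of : forall u u' (R : env -> env -> Prop),
  (forall G A n, tyj G u A n -> exists G', R G G' /\ tyj G' u' A n) ->
  (forall G1 G2 G1' G2', R G1 G1' -> R G2 G2' -> R (sum G1 G2) (sum G1' G2')) ->
  (forall G, eqv G empty -> exists G', R G G' /\ eqv G' empty) ->
  (forall G G' D, eqv G D -> R G G' -> R D G') ->
  forall L G n, tys G u L n -> exists G', R G G' /\ tys G' u' L n.
Proof.
  intros u u' R Hu Hs He Hq. induction L; intros G n H.
  - apply tys_nil_inv in H as [E ->]. destruct (He G E) as (G' & HR & E').
    exists G'; split; auto. constructor; auto.
  - apply tys_cons_inv in H as (G1 & G2 & n1 & n2 & H1 & H2 & E & ->).
    destruct (Hu _ _ _ H1) as (G1' & R1 & T1). destruct (IHL _ _ H2) as (G2' & R2 & T2).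
    exists (sum G1' G2'). split. eapply Hq; [symmetry; eauto|]. apply Hs; auto.
    econstructor; eauto. reflexivity.
Qed.

Lemma lift_ty : forall t c k G A n, tyj G t A n -> tyj (ins c k G) (lift c k t) A n.
Proof.
  assert (Htys : forall u c k, (forall G A n, tyj G u A n -> tyj (ins c k G) (lift c k u) A n) ->
     forall L G n, tys G u L n -> tys (ins c k G) (lift c k u) L n).
  { intros u c k Hu L G n H.
    destruct (tys_of u (lift c k u) (fun G G' => eqv G' (ins c k G))) with (L := L) (G := G) (n := n)
      as (G' & E & T); auto.
    - intros; eexists; split; [reflexivity|]; auto.
    - intros. rewrite H0, H1. symmetry. apply ins_sum.
    - intros. exists empty; split; [|reflexivity]. rewrite H0. symmetry; apply ins_empty.
    - intros. rewrite H1. rewrite H0. reflexivity.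
    - rewrite <- E; auto. }
  induction t; intros c k G A m H; simpl.
  - apply ty_var_inv in H as [E ->]. destruct (Nat.leb_spec c n).
    + constructor. rewrite E. apply ins_single_ge; auto.
    + constructor. rewrite E. apply ins_single_lt; auto.
  - apply ty_lam_inv in H as [(-> & E & ->) | (M & B & k' & -> & H & ->)].
    + constructor. rewrite E. apply ins_empty.
    + constructor. apply IHt with (c := S c) (k := k) in H. rewrite ins_scons in H. auto.
  - apply ty_app_inv in H as (G1 & G2 & M & k1 & k2 & H1 & H2 & E & ->).
    econstructor; [apply IHt1; eauto | apply Htys; eauto | ]. rewrite E. apply ins_sum.
  - apply ty_es_inv in H as (G1 & G2 & M & k1 & k2 & H1 & H2 & E & ->).
    econstructor; [ | apply Htys; eauto | ].
    + apply IHt1 with (c := S c) (k := k) in H1. rewrite ins_scons in H1. eauto.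
    + rewrite E. apply ins_sum.
Qed.

Lemma lift_tys : forall u c k L G n, tys G u L n -> tys (ins c k G) (lift c k u) L n.
Proof.
  intros u c k L G n H.
  destruct (tys_of u (lift c k u) (fun G G' => eqv G' (ins c k G))) with (L := L) (G := G) (n := n)
    as (G' & E & T); auto.
  - intros; eexists; split; [reflexivity|]; apply lift_ty; auto.
  - intros. rewrite H0, H1. symmetry. apply ins_sum.
  - intros. exists empty; split; [|reflexivity]. rewrite H0. symmetry; apply ins_empty.
  - intros. rewrite H1. rewrite H0. reflexivity.
  - rewrite <- E; auto.
Qed.

Lemma unlift_ty : forall t c k D A n, tyj D (lift c k t) A n ->
  exists G, eqv D (ins c k G) /\ tyj G t A n.
Proof.
  assert (Htys : forall u c k, (forall D A n, tyj D (lift c k u) A n -> exists G, eqv D (ins c k G) /\ tyj G u A n) ->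
     forall L D n, tys D (lift c k u) L n -> exists G, eqv D (ins c k G) /\ tys G u L n).
  { intros u c k Hu L D n H.
    apply (tys_of (lift c k u) u (fun D G => eqv D (ins c k G))) with (L := L); auto.
    - intros. rewrite H0, H1. symmetry. apply ins_sum.
    - intros. exists empty; split; [|reflexivity]. rewrite H0. symmetry; apply ins_empty.
    - intros. rewrite <- H0. auto. }
  induction t; intros c k D A m H; simpl in H.
  - destruct (Nat.leb_spec c n).
    + apply ty_var_inv in H as [E ->]. exists (single n [A]). split; [|constructor; reflexivity].
      rewrite E. symmetry. apply ins_single_ge; auto.
    + apply ty_var_inv in H as [E ->]. exists (single n [A]). split; [|constructor; reflexivity].
      rewrite E. symmetry. apply ins_single_lt; auto.
  - apply ty_lam_inv in H as [(-> & E & ->) | (M & B & k' & -> & H & ->)].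
    + exists empty. split; [rewrite E; symmetry; apply ins_empty| constructor; reflexivity].
    + destruct (IHt _ _ _ _ _ H) as (G' & E & T). exists (etl G'). split.
      * rewrite <- ins_tl. rewrite <- E. symmetry. apply tl_scons.
      * constructor. rewrite scons_tl; auto. intro B0. specialize (E 0 B0). simpl in E. rewrite E.
        unfold ins. simpl. reflexivity.
  - apply ty_app_inv in H as (G1 & G2 & M & k1 & k2 & H1 & H2 & E & ->).
    destruct (IHt1 _ _ _ _ _ H1) as (G1' & E1 & T1).
    destruct (Htys _ _ _ (IHt2 c k) _ _ _ H2) as (G2' & E2 & T2).
    exists (sum G1' G2'). split; [rewrite E, E1, E2; symmetry; apply ins_sum|].
    econstructor; eauto. reflexivity.
  - apply ty_es_inv in H as (G1 & G2 & M & k1 & k2 & H1 & H2 & E & ->).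
    destruct (IHt1 _ _ _ _ _ H1) as (G1' & E1 & T1).
    destruct (Htys _ _ _ (IHt2 c k) _ _ _ H2) as (G2' & E2 & T2).
    exists (sum (etl G1') G2'). split.
    + rewrite E, E2, ins_sum. apply sum_proper; [|reflexivity].
      rewrite <- ins_tl. rewrite <- E1. symmetry. apply tl_scons.
    + econstructor; eauto; [|reflexivity]. rewrite scons_tl; auto.
      intro B0. specialize (E1 0 B0). simpl in E1. rewrite E1. unfold ins. simpl. reflexivity.
Qed.

Lemma unlift_tys : forall u c k L D n, tys D (lift c k u) L n ->
  exists G, eqv D (ins c k G) /\ tys G u L n.
Proof.
  intros u c k L D n H.
  apply (tys_of (lift c k u) u (fun D G => eqv D (ins c k G))) with (L := L); auto.
  - intros. apply unlift_ty; auto.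
  - intros. rewrite H0, H1. symmetry. apply ins_sum.
  - intros. exists empty; split; [|reflexivity]. rewrite H0. symmetry; apply ins_empty.
  - intros. rewrite <- H0. auto.
Qed.

Lemma single_nil : forall k, eqv (single k []) empty.
Proof. intros k i B; unfold single; destruct (i =? k); reflexivity. Qed.
Lemma single_app : forall k L1 L2, eqv (single k (L1 ++ L2)) (sum (single k L1) (single k L2)).
Proof. intros k L1 L2 i B; unfold single, sum; destruct (i =? k); reflexivity. Qed.
Lemma etl_single : forall k L, eqv (etl (single (S k) L)) (single k L).
Proof. intros k L i B; reflexivity. Qed.
Lemma single_0 : forall k L, single (S k) L 0 = [].
Proof. reflexivity. Qed.
Lemma ins01 : forall G, eqv (ins 0 1 G) (scons [] G).
Proof. intros G i B; destruct i; [reflexivity|]. unfold ins; simpl; rewrite Nat.sub_0_r; reflexivity. Qed.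
Lemma scons_single : forall k L, eqv (single (S k) L) (scons [] (single k L)).
Proof. intros k L i B; destruct i; reflexivity. Qed.

Lemma tys_single : forall G u A n, tyj G u A n -> tys G u [A] n.
Proof. intros. rewrite <- (Nat.add_0_r n). econstructor; eauto. constructor; reflexivity.
  symmetry; apply sum_empty_r. Qed.
Lemma tys_single_inv : forall G u A n, tys G u [A] n -> tyj G u A n.
Proof. intros. apply tys_cons_inv in H as (G1 & G2 & n1 & n2 & H1 & H2 & E & ->).
  apply tys_nil_inv in H2 as [E2 ->]. rewrite E, E2, sum_empty_r, Nat.add_0_r; auto. Qed.

Definition Psub (X : term) (Y : term -> term) (k : nat) :=
  forall G A n, tyj G X A n -> exists L G' nw, L <> [] /\ eqv G (sum G' (single k L)) /\
    n = nw + length L /\ forall u Gu nu, tys Gu u L nu -> tyj (sum G' Gu) (Y u) A (nw + nu).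

Lemma Psub_tys : forall X Y k, Psub X Y k ->
  forall Ls G n, tys G X Ls n -> exists L G' nw, (Ls <> [] -> L <> []) /\ eqv G (sum G' (single k L)) /\
    n = nw + length L /\ forall u Gu nu, tys Gu u L nu -> tys (sum G' Gu) (Y u) Ls (nw + nu).
Proof.
  intros X Y k HP. induction Ls; intros G n H.
  - apply tys_nil_inv in H as [E ->]. exists [], G, 0. split; [congruence|]. split.
    { rewrite single_nil, sum_empty_r; reflexivity. } split; [reflexivity|].
    intros u Gu nu Hu. apply tys_nil_inv in Hu as [Eu ->]. constructor. rewrite E, Eu. apply sum_empty_r.
  - apply tys_cons_inv in H as (G1 & G2 & n1 & n2 & H1 & H2 & E & ->).
    destruct (HP _ _ _ H1) as (L1 & G1' & nw1 & NE1 & E1 & -> & R1).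
    destruct (IHLs _ _ H2) as (L2 & G2' & nw2 & NE2 & E2 & -> & R2).
    exists (L1 ++ L2), (sum G1' G2'), (nw1 + nw2). split.
    { intros _. destruct L1; [congruence| simpl; congruence]. } split.
    { rewrite E, E1, E2, single_app. envsolve. } split.
    { rewrite length_app. lia. }
    intros u Gu nu Hu. apply tys_split in Hu as (Gu1 & Gu2 & nu1 & nu2 & Hu1 & Hu2 & Eu & ->).
    replace (nw1 + nw2 + (nu1 + nu2)) with ((nw1 + nu1) + (nw2 + nu2)) by lia.
    econstructor; [apply R1; eauto | apply R2; eauto | ]. rewrite Eu. envsolve.
Qed.

Lemma W_subst : forall W k, Psub (plug_w W (Var (wdepth W + k))) (fun u => plug_w W (lift 0 (wdepth W) u)) k.
Proof.
  induction W; intros k G A n H; simpl in *.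
  - apply ty_var_inv in H as [E ->]. exists [A], empty, 0. split; [congruence|]. split.
    { rewrite E, sum_empty_l; reflexivity. } split; [reflexivity|].
    intros u Gu nu Hu. rewrite lift_0, sum_empty_l. apply tys_single_inv; auto.
  - apply ty_app_inv in H as (G1 & G2 & M & k1 & k2 & H1 & H2 & E & ->).
    destruct (IHW k _ _ _ H1) as (L & G' & nw & NE & E1 & -> & R).
    exists L, (sum G' G2), (S (nw + k2)). split; auto. split; [rewrite E, E1; envsolve|].
    split; [lia|]. intros u Gu nu Hu.
    replace (S (nw + k2) + nu) with (S ((nw + nu) + k2)) by lia.
    econstructor; [apply R; eauto | eauto | envsolve].
  - apply ty_app_inv in H as (G1 & G2 & M & k1 & k2 & H1 & H2 & E & ->).
    destruct (Psub_tys _ _ _ (IHW k) _ _ _ H2) as (L & G' & nw & NE & E1 & -> & R).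
    exists L, (sum G1 G'), (S (k1 + nw)). split; [apply NE; congruence|]. split; [rewrite E, E1; envsolve|].
    split; [lia|]. intros u Gu nu Hu.
    replace (S (k1 + nw) + nu) with (S (k1 + (nw + nu))) by lia.
    econstructor; [eauto | apply R; eauto | envsolve].
  - apply ty_es_inv in H as (G1 & G2 & M & k1 & k2 & H1 & H2 & E & ->).
    destruct (Psub_tys _ _ _ (IHW k) _ _ _ H2) as (L & G' & nw & NE & E1 & -> & R).
    exists L, (sum G1 G'), (S (k1 + nw)). split; [apply NE; congruence|]. split; [rewrite E, E1; envsolve|].
    split; [lia|]. intros u Gu nu Hu.
    replace (S (k1 + nw) + nu) with (S (k1 + (nw + nu))) by lia.
    econstructor; [eauto | apply R; eauto | envsolve].
  - apply ty_es_inv in H as (G1 & G2 & M & k1 & k2 & H1 & H2 & E & ->).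
    replace (S (wdepth W + k)) with (wdepth W + S k) in H1 by lia.
    destruct (IHW (S k) _ _ _ H1) as (L & G'' & nw & NE & E1 & -> & R).
    exists L, (sum (etl G'') G2), (S (nw + k2)). split; auto. split.
    { rewrite E. assert (eqv G1 (sum (etl G'') (single k L))).
      { rewrite <- (tl_scons M G1), E1, tl_sum, etl_single. reflexivity. }
      rewrite H. envsolve. }
    split; [lia|]. intros u Gu nu Hu.
    pose proof (R _ _ _ (lift_tys u 0 1 _ _ _ Hu)) as T.
    rewrite lift_lift in T. simpl in T.
    replace (S (nw + k2) + nu) with (S ((nw + nu) + k2)) by lia.
    assert (HM : meq M (G'' 0)).
    { intro B. pose proof (E1 0 B) as e. unfold sum in e. simpl in e. rewrite e, cnt_app. simpl. lia. }
    econstructor; [ | apply (tys_meq _ _ _ _ _ HM); eauto | ].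
    + rewrite ins01 in T. assert (EE : eqv (sum G'' (scons [] Gu)) (scons (G'' 0) (sum (etl G'') Gu))) by envsolve.
      rewrite EE in T. exact T.
    + envsolve.
Qed.

Definition Panti (Y : term -> term) (X : nat -> term) :=
  forall u k G A n, tyj G (Y u) A n -> exists L G' Gu nu nw, L <> [] /\ tys Gu u L nu /\
    eqv G (sum G' Gu) /\ n = nw + nu /\ tyj (sum G' (single k L)) (X k) A (nw + length L).

Lemma Panti_tys : forall Y X, Panti Y X ->
  forall u k Ls G n, tys G (Y u) Ls n -> exists L G' Gu nu nw, (Ls <> [] -> L <> []) /\ tys Gu u L nu /\
    eqv G (sum G' Gu) /\ n = nw + nu /\ tys (sum G' (single k L)) (X k) Ls (nw + length L).
Proof.
  intros Y X HP u k. induction Ls; intros G n H.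
  - apply tys_nil_inv in H as [E ->]. exists [], G, empty, 0, 0. split; [congruence|].
    split; [constructor; reflexivity|]. split; [rewrite sum_empty_r; reflexivity|]. split; [reflexivity|].
    constructor. rewrite single_nil, sum_empty_r; auto.
  - apply tys_cons_inv in H as (G1 & G2 & n1 & n2 & H1 & H2 & E & ->).
    destruct (HP u k _ _ _ H1) as (L1 & G1' & Gu1 & nu1 & nw1 & NE1 & U1 & E1 & -> & R1).
    destruct (IHLs _ _ H2) as (L2 & G2' & Gu2 & nu2 & nw2 & NE2 & U2 & E2 & -> & R2).
    exists (L1 ++ L2), (sum G1' G2'), (sum Gu1 Gu2), (nu1 + nu2), (nw1 + nw2). split.
    { intros _. destruct L1; [congruence| simpl; congruence]. }
    split; [apply tys_app; auto|]. split; [rewrite E, E1, E2; envsolve|]. split; [lia|].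
    rewrite length_app. replace (nw1 + nw2 + (length L1 + length L2)) with
      ((nw1 + length L1) + (nw2 + length L2)) by lia.
    econstructor; eauto. rewrite single_app. envsolve.
Qed.

Lemma W_anti : forall W, Panti (fun u => plug_w W (lift 0 (wdepth W) u)) (fun k => plug_w W (Var (wdepth W + k))).
Proof.
  induction W; intros u k G A n H; simpl in *.
  - rewrite lift_0 in H. exists [A], empty, G, (n + 0), 0. split; [congruence|].
    split; [apply tys_single; rewrite Nat.add_0_r; auto|]. split; [rewrite sum_empty_l; reflexivity|].
    split; [lia|]. constructor. rewrite sum_empty_l; reflexivity.
  - apply ty_app_inv in H as (G1 & G2 & M & k1 & k2 & H1 & H2 & E & ->).
    destruct (IHW _ k _ _ _ H1) as (L & G' & Gu & nu & nw & NE & U & E1 & -> & R).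
    exists L, (sum G' G2), Gu, nu, (S (nw + k2)). split; auto. split; auto.
    split; [rewrite E, E1; envsolve|]. split; [lia|].
    replace (S (nw + k2) + length L) with (S ((nw + length L) + k2)) by lia.
    econstructor; eauto. envsolve.
  - apply ty_app_inv in H as (G1 & G2 & M & k1 & k2 & H1 & H2 & E & ->).
    destruct (Panti_tys _ _ IHW _ k _ _ _ H2) as (L & G' & Gu & nu & nw & NE & U & E1 & -> & R).
    exists L, (sum G1 G'), Gu, nu, (S (k1 + nw)). split; [apply NE; congruence|]. split; auto.
    split; [rewrite E, E1; envsolve|]. split; [lia|].
    replace (S (k1 + nw) + length L) with (S (k1 + (nw + length L))) by lia.
    econstructor; eauto. envsolve.
  - apply ty_es_inv in H as (G1 & G2 & M & k1 & k2 & H1 & H2 & E & ->).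
    destruct (Panti_tys _ _ IHW _ k _ _ _ H2) as (L & G' & Gu & nu & nw & NE & U & E1 & -> & R).
    exists L, (sum G1 G'), Gu, nu, (S (k1 + nw)). split; [apply NE; congruence|]. split; auto.
    split; [rewrite E, E1; envsolve|]. split; [lia|].
    replace (S (k1 + nw) + length L) with (S (k1 + (nw + length L))) by lia.
    econstructor; eauto. envsolve.
  - apply ty_es_inv in H as (G1 & G2 & M & k1 & k2 & H1 & H2 & E & ->).
    replace (lift 0 (S (wdepth W)) u) with (lift 0 (wdepth W) (lift 0 1 u)) in H1
      by (rewrite lift_lift; reflexivity).
    destruct (IHW _ (S k) _ _ _ H1) as (L & G'' & Gu' & nu & nw & NE & U & E1 & -> & R).
    apply unlift_tys in U as (Gu & EU & U).
    rewrite ins01 in EU.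
    exists L, (sum (etl G'') G2), Gu, nu, (S (nw + k2)). split; auto. split; auto. split.
    { rewrite E. assert (eqv G1 (sum (etl G'') Gu)).
      { rewrite <- (tl_scons M G1), E1, tl_sum, EU, tl_scons. reflexivity. }
      rewrite H. envsolve. }
    split; [lia|].
    assert (HM : meq M (G'' 0)).
    { intro B. pose proof (E1 0 B) as e. pose proof (EU 0 B) as e'. unfold sum in e. simpl in e, e'.
      rewrite e, cnt_app, e'. simpl. lia. }
    replace (S (wdepth W + k)) with (wdepth W + S k) by lia.
    replace (S (nw + k2) + length L) with (S ((nw + length L) + k2)) by lia.
    econstructor; [ | apply (tys_meq _ _ _ _ _ HM); eauto | ].
    + rewrite scons_single in R.
      assert (EE : eqv (sum G'' (scons [] (single k L))) (scons (G'' 0) (sum (etl G'') (single k L)))) by envsolve.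
      rewrite EE in R. exact R.
    + envsolve.
Qed.

Lemma meq_nil : forall M, meq M [] -> M = [].
Proof. intros [|B M] H; auto. specialize (H B). unfold cnt in H. simpl in H.
  destruct (tyd B B); [discriminate | congruence]. Qed.

Lemma etl_single0 : forall L, eqv (etl (single 0 L)) empty.
Proof. intros L i B; reflexivity. Qed.

Lemma m_red : forall s t u G1 G2 M A n1 n2, tyj G1 (plug_s s (Lam t)) (Arr M A) n1 ->
  tys G2 u (O :: M) n2 -> tyj (sum G1 G2) (plug_s s (ES t (lift 0 (length s) u))) A (n1 + n2).
Proof.
  induction s as [|a s IH]; intros t u G1 G2 M A n1 n2 H1 H2; simpl in *.
  - apply ty_lam_inv in H1 as [(? & _ & _) | (M' & B & k & HA & H & ->)]; [discriminate|].
    injection HA as -> ->. rewrite lift_0. econstructor; eauto. reflexivity.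
  - apply ty_es_inv in H1 as (Ga & Gb & M' & k1 & k2 & Hb & Ha & E & ->).
    pose proof (IH t (lift 0 1 u) _ _ _ _ _ _ Hb (lift_tys _ 0 1 _ _ _ H2)) as T.
    rewrite lift_lift in T. simpl in T. rewrite ins01 in T.
    assert (EE : eqv (sum (scons M' Ga) (scons [] G2)) (scons M' (sum Ga G2))) by envsolve.
    rewrite EE in T.
    replace (S (k1 + k2) + n2) with (S ((k1 + n2) + k2)) by lia.
    econstructor; eauto. rewrite E. envsolve.
Qed.

Lemma m_exp : forall s t u G A n, tyj G (plug_s s (ES t (lift 0 (length s) u))) A n ->
  exists G1 G2 M n1 n2, tyj G1 (plug_s s (Lam t)) (Arr M A) n1 /\ tys G2 u (O :: M) n2 /\ eqv G (sum G1 G2).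
Proof.
  induction s as [|a s IH]; intros t u G A n H; simpl in *.
  - rewrite lift_0 in H. apply ty_es_inv in H as (G1 & G2 & M & k1 & k2 & H1 & H2 & E & ->).
    exists G1, G2, M, (S k1), k2. split; [constructor; auto|]. split; auto.
  - apply ty_es_inv in H as (Ga & Gb & M' & k1 & k2 & H1 & H2 & E & ->).
    replace (lift 0 (S (length s)) u) with (lift 0 (length s) (lift 0 1 u)) in H1
      by (rewrite lift_lift; reflexivity).
    destruct (IH _ _ _ _ _ H1) as (G1' & G2' & M & n1 & n2 & T1 & T2 & E1).
    apply unlift_tys in T2 as (Gu & EU & T2). rewrite ins01 in EU.
    assert (HM : meq M' (G1' 0)).
    { intro B. pose proof (E1 0 B) as e. pose proof (EU 0 B) as e'. unfold sum in e. simpl in e, e'.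
      rewrite e, cnt_app, e'. simpl. lia. }
    exists (sum (etl G1') Gb), Gu, M, (S (n1 + k2)), n2. split; [|split; auto].
    + econstructor; [|eauto|reflexivity]. rewrite scons_tl; eauto.
    + assert (eqv Ga (sum (etl G1') Gu)).
      { rewrite <- (tl_scons M' Ga), E1, tl_sum, EU, tl_scons. reflexivity. }
      rewrite E, H. envsolve.
Qed.

Lemma gc_red : forall s b G2 k2 G1 t0 A k1, tyj G2 (plug_s s (Lam b)) O (S k2) ->
  tyj G1 t0 A k1 -> tyj (sum G1 G2) (plug_s s (lift 0 (length s) t0)) A (k1 + k2).
Proof.
  induction s as [|a s IH]; intros b G2 k2 G1 t0 A k1 H1 H2; simpl in *.
  - apply ty_lam_inv in H1 as [(_ & E & HH) | (M' & B & k & HA & H & HH2)]; [|discriminate].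
    injection HH as ->. rewrite lift_0, E, sum_empty_r, Nat.add_0_r. auto.
  - apply ty_es_inv in H1 as (Ga & Gb & M & kb & ka & Hb & Ha & E & HH). injection HH as ->.
    pose proof (tyj_pos _ _ _ _ Hb) as Hp. destruct kb as [|kb]; [lia|].
    pose proof (IH _ _ _ _ _ _ _ Hb (lift_ty _ 0 1 _ _ _ H2)) as T.
    rewrite lift_lift in T. simpl in T. rewrite ins01 in T.
    assert (EE : eqv (sum (scons [] G1) (scons M Ga)) (scons M (sum G1 Ga))) by envsolve.
    rewrite EE in T.
    replace (k1 + (S kb + ka)) with (S ((k1 + kb) + ka)) by lia.
    econstructor; eauto. rewrite E. envsolve.
Qed.

Lemma gc_exp : forall s b t0 G A n, tyj G (plug_s s (lift 0 (length s) t0)) A n ->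
  exists G1 G2 k1 k2, tyj G1 t0 A k1 /\ tyj G2 (plug_s s (Lam b)) O k2 /\ eqv G (sum G1 G2).
Proof.
  induction s as [|a s IH]; intros b t0 G A n H; simpl in *.
  - rewrite lift_0 in H. exists G, empty, n, 1. split; auto. split; [constructor; reflexivity|].
    rewrite sum_empty_r; reflexivity.
  - apply ty_es_inv in H as (Ga & Gb & M & k1 & k2 & H1 & H2 & E & ->).
    replace (lift 0 (S (length s)) t0) with (lift 0 (length s) (lift 0 1 t0)) in H1
      by (rewrite lift_lift; reflexivity).
    destruct (IH b _ _ _ _ H1) as (G1' & G2' & n1 & n2 & T1 & T2 & E1).
    apply unlift_ty in T1 as (G1 & EU & T1). rewrite ins01 in EU.
    assert (HM : meq M (G2' 0)).
    { intro B. pose proof (E1 0 B) as e. pose proof (EU 0 B) as e'. unfold sum in e. simpl in e, e'.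
      rewrite e, cnt_app, e'. simpl. lia. }
    exists G1, (sum (etl G2') Gb), n1, (S (n2 + k2)). split; auto. split.
    + econstructor; [|eauto|reflexivity]. rewrite scons_tl; eauto.
    + assert (eqv Ga (sum G1 (etl G2'))).
      { rewrite <- (tl_scons M Ga), E1, tl_sum, EU, tl_scons. reflexivity. }
      rewrite E, H. envsolve.
Qed.

Lemma root_red : forall r r', root_step r r' -> forall G A n, tyj G r A n -> exists n', n' < n /\ tyj G r' A n'.
Proof.
  intros r r' Hr; destruct Hr as [s t u | W u | t s v Hv Hf]; intros G A n H.
  - apply ty_app_inv in H as (G1 & G2 & M & k1 & k2 & H1 & H2 & E & ->).
    exists (k1 + k2). split; [lia|]. rewrite E. eapply m_red; eauto.
  - apply ty_es_inv in H as (G1 & G2 & M & k1 & k2 & H1 & H2 & E & ->).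
    rewrite <- (Nat.add_0_r (wdepth W)) in H1.
    destruct (W_subst W 0 _ _ _ H1) as (L & G' & nw & NE & E1 & -> & R).
    assert (HM : meq M (G' 0 ++ L)).
    { intro B. pose proof (E1 0 B) as e. unfold sum, single in e. simpl in e. rewrite e, !cnt_app. lia. }
    assert (P : Permutation (O :: M) ((O :: G' 0) ++ L)) by (simpl; apply perm_skip, meq_perm; auto).
    apply (tys_perm _ _ _ P) in H2. apply tys_split in H2 as (Ga & Gb & na & nb & Ha & Hb & E2 & ->).
    pose proof (R _ _ _ (lift_tys u 0 1 _ _ _ Hb)) as T.
    rewrite lift_lift in T. simpl in T. rewrite ins01 in T.
    assert (EE : eqv (sum G' (scons [] Gb)) (scons (G' 0) (sum (etl G') Gb))) by envsolve.
    rewrite EE in T.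
    exists (S ((nw + nb) + na)). split; [destruct L; [congruence|simpl; lia]|].
    econstructor; eauto.
    assert (eqv G1 (etl G')).
    { rewrite <- (tl_scons M G1), E1, tl_sum, etl_single0, sum_empty_r. reflexivity. }
    rewrite E, H, E2. envsolve.
  - destruct Hv as [b ->].
    apply ty_es_inv in H as (G1 & G2 & M & k1 & k2 & H1 & H2 & E & ->).
    rewrite <- (lift_lower t 0 Hf) in H1.
    apply unlift_ty in H1 as (G1' & EU & T1). rewrite ins01 in EU.
    assert (HM : M = []).
    { apply meq_nil. intro B. pose proof (EU 0 B) as e. simpl in e. rewrite e. reflexivity. }
    subst M. apply tys_single_inv in H2.
    pose proof (tyj_pos _ _ _ _ H2). destruct k2 as [|k2]; [lia|].
    exists (k1 + k2). split; [lia|].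
    assert (HG : eqv G1 G1') by (rewrite <- (tl_scons [] G1), EU, tl_scons; reflexivity).
    rewrite E, HG. eapply gc_red; eauto.
Qed.

Lemma root_exp : forall r r', root_step r r' -> forall G A n, tyj G r' A n -> exists n', tyj G r A n'.
Proof.
  intros r r' Hr; destruct Hr as [s t u | W u | t s v Hv Hf]; intros G A n H.
  - apply m_exp in H as (G1 & G2 & M & n1 & n2 & T1 & T2 & E).
    eexists. econstructor; eauto.
  - apply ty_es_inv in H as (G1 & G2 & M & k1 & k2 & H1 & H2 & E & ->).
    replace (lift 0 (S (wdepth W)) u) with (lift 0 (wdepth W) (lift 0 1 u)) in H1
      by (rewrite lift_lift; reflexivity).
    destruct (W_anti W (lift 0 1 u) 0 _ _ _ H1) as (L & G' & Gu' & nu & nw & NE & U & E1 & _ & R).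
    apply unlift_tys in U as (Gu & EU & U). rewrite ins01 in EU.
    rewrite Nat.add_0_r in R.
    assert (HM : meq (M ++ L) (G' 0 ++ L)).
    { intro B. pose proof (E1 0 B) as e. pose proof (EU 0 B) as e'. unfold sum in e. simpl in e, e'.
      rewrite !cnt_app, e, cnt_app, e'. simpl. lia. }
    assert (EE : eqv (sum G' (single 0 L)) (scons (G' 0 ++ L) (etl G'))).
    { intros i B; destruct i; unfold sum, single; simpl; [reflexivity|]. rewrite app_nil_r; reflexivity. }
    rewrite EE in R.
    pose proof (tys_app _ _ _ _ _ _ _ H2 U) as T. simpl in T. apply (tys_meq _ _ _ _ _ HM) in T.
    eexists. econstructor; eauto.
    assert (eqv G1 (sum (etl G') Gu)).
    { rewrite <- (tl_scons M G1), E1, tl_sum, EU, tl_scons. reflexivity. }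
    rewrite E, H. envsolve.
  - destruct Hv as [b ->].
    apply gc_exp with (b := b) in H as (G1 & G2 & k1 & k2 & T1 & T2 & E).
    exists (S (k1 + k2)). econstructor; [ | apply tys_single; eauto | ].
    + rewrite <- (lift_lower t 0 Hf). apply lift_ty with (c := 0) (k := 1) in T1. rewrite ins01 in T1. exact T1.
    + rewrite E. reflexivity.
Qed.

Lemma tys_lift_ex : forall X X', (forall G A n, tyj G X A n -> exists n', tyj G X' A n') ->
  forall L G n, tys G X L n -> exists n', tys G X' L n'.
Proof.
  intros X X' HX. induction L; intros G n H.
  - apply tys_nil_inv in H as [E ->]. exists 0. constructor; auto.
  - apply tys_cons_inv in H as (G1 & G2 & n1 & n2 & H1 & H2 & E & ->).
    destruct (HX _ _ _ H1) as (m1 & T1). destruct (IHL _ _ H2) as (m2 & T2).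
    exists (m1 + m2). econstructor; eauto.
Qed.

Lemma c_red_gen : forall C r r', (forall G A n, tyj G r A n -> exists n', tyj G r' A n') ->
  forall G A n, tyj G (plug C r) A n -> exists n', tyj G (plug C r') A n'.
Proof.
  induction C; intros r r' Hr G A n H; simpl in *; eauto.
  - apply ty_lam_inv in H as [(-> & E & ->) | (M & B & k & -> & H & ->)].
    + exists 1. constructor; auto.
    + destruct (IHC _ _ Hr _ _ _ H) as (k' & T). exists (S k'). constructor; auto.
  - apply ty_app_inv in H as (G1 & G2 & M & k1 & k2 & H1 & H2 & E & ->).
    destruct (IHC _ _ Hr _ _ _ H1) as (k' & T). eexists. econstructor; eauto.
  - apply ty_app_inv in H as (G1 & G2 & M & k1 & k2 & H1 & H2 & E & ->).
    destruct (tys_lift_ex _ _ (IHC _ _ Hr) _ _ _ H2) as (k' & T). eexists. econstructor; eauto.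
  - apply ty_es_inv in H as (G1 & G2 & M & k1 & k2 & H1 & H2 & E & ->).
    destruct (IHC _ _ Hr _ _ _ H1) as (k' & T). eexists. econstructor; eauto.
  - apply ty_es_inv in H as (G1 & G2 & M & k1 & k2 & H1 & H2 & E & ->).
    destruct (tys_lift_ex _ _ (IHC _ _ Hr) _ _ _ H2) as (k' & T). eexists. econstructor; eauto.
Qed.

Lemma tys_lift_lt : forall X X', (forall G A n, tyj G X A n -> exists n', n' < n /\ tyj G X' A n') ->
  forall L G n, tys G X L n -> exists n', n' <= n /\ (L <> [] -> n' < n) /\ tys G X' L n'.
Proof.
  intros X X' HX. induction L; intros G n H.
  - apply tys_nil_inv in H as [E ->]. exists 0. split; [lia|]. split; [congruence|]. constructor; auto.
  - apply tys_cons_inv in H as (G1 & G2 & n1 & n2 & H1 & H2 & E & ->).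
    destruct (HX _ _ _ H1) as (m1 & L1 & T1). destruct (IHL _ _ H2) as (m2 & L2 & _ & T2).
    exists (m1 + m2). split; [lia|]. split; [lia|]. econstructor; eauto.
Qed.

Lemma w_red : forall W r r', (forall G A n, tyj G r A n -> exists n', n' < n /\ tyj G r' A n') ->
  forall G A n, tyj G (plug_w W r) A n -> exists n', n' < n /\ tyj G (plug_w W r') A n'.
Proof.
  induction W; intros r r' Hr G A n H; simpl in *; eauto.
  - apply ty_app_inv in H as (G1 & G2 & M & k1 & k2 & H1 & H2 & E & ->).
    destruct (IHW _ _ Hr _ _ _ H1) as (k' & Lt & T). exists (S (k' + k2)). split; [lia|]. econstructor; eauto.
  - apply ty_app_inv in H as (G1 & G2 & M & k1 & k2 & H1 & H2 & E & ->).
    destruct (tys_lift_lt _ _ (IHW _ _ Hr) _ _ _ H2) as (k' & _ & Lt & T).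
    specialize (Lt ltac:(congruence)). exists (S (k1 + k')). split; [lia|]. econstructor; eauto.
  - apply ty_es_inv in H as (G1 & G2 & M & k1 & k2 & H1 & H2 & E & ->).
    destruct (tys_lift_lt _ _ (IHW _ _ Hr) _ _ _ H2) as (k' & _ & Lt & T).
    specialize (Lt ltac:(congruence)). exists (S (k1 + k')). split; [lia|]. econstructor; eauto.
  - apply ty_es_inv in H as (G1 & G2 & M & k1 & k2 & H1 & H2 & E & ->).
    destruct (IHW _ _ Hr _ _ _ H1) as (k' & Lt & T). exists (S (k' + k2)). split; [lia|]. econstructor; eauto.
Qed.

Definition T (s : term) := exists G A n, tyj G s A n.

Lemma T_WN : forall n s G A, tyj G s A n -> weakly_normalizing s.
Proof.
  intro n. induction n as [n IH] using (well_founded_induction lt_wf). intros s G A H.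
  destruct (classic (exists s', wstep s s')) as [[s' Hs] | Hn].
  - destruct Hs as (W & r & r' & Hr & -> & ->).
    destruct (w_red W r r' (root_red r r' Hr) _ _ _ H) as (n' & Lt & T').
    destruct (IH n' Lt _ _ _ T') as (v & Hv & Nv). exists v. split; auto.
    eapply rt_trans; [apply rt_step|apply Hv]. exists W, r, r'; auto.
  - exists s. split; [apply rt_refl|]. intros u Hu. apply Hn; eauto.
Qed.

Fixpoint w2c (W : wctx) : ctx :=
  match W with
  | WHole => CHole
  | WAppL W u => CAppL (w2c W) u
  | WAppR u W => CAppR u (w2c W)
  | WESR u W => CESR u (w2c W)
  | WESL W u => CESL (w2c W) u
  end.
Lemma plug_w2c : forall W t, plug_w W t = plug (w2c W) t.
Proof. induction W; intros; simpl; try rewrite IHW; auto. Qed.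

Fixpoint ccomp (C D : ctx) : ctx :=
  match C with
  | CHole => D
  | CLam C => CLam (ccomp C D)
  | CAppL C u => CAppL (ccomp C D) u
  | CAppR u C => CAppR u (ccomp C D)
  | CESL C u => CESL (ccomp C D) u
  | CESR u C => CESR u (ccomp C D)
  end.
Lemma plug_ccomp : forall C D t, plug (ccomp C D) t = plug C (plug D t).
Proof. induction C; intros; simpl; try rewrite IHC; auto. Qed.

Fixpoint wcomp (W V : wctx) : wctx :=
  match W with
  | WHole => V
  | WAppL W u => WAppL (wcomp W V) u
  | WAppR u W => WAppR u (wcomp W V)
  | WESR u W => WESR u (wcomp W V)
  | WESL W u => WESL (wcomp W V) u
  end.
Lemma plug_wcomp : forall W V t, plug_w (wcomp W V) t = plug_w W (plug_w V t).
Proof. induction W; intros; simpl; try rewrite IHW; auto. Qed.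

Lemma wnormal_sub : forall W t, wnormal (plug_w W t) -> wnormal t.
Proof.
  intros W t H u (V & r & r' & Hr & -> & ->). apply (H (plug_w W (plug_w V r'))).
  exists (wcomp W V), r, r'. rewrite !plug_wcomp. auto.
Qed.

Definition wocc i t := exists W, t = plug_w W (Var (wdepth W + i)).
Definition ans t := exists s b, t = plug_s s (Lam b).

Lemma nf_ty : forall t, wnormal t ->
  (exists G n, tyj G t O n /\ forall i, ~ wocc i t -> G i = []) /\
  (~ ans t -> forall A, exists G n, tyj G t A n /\ forall i, ~ wocc i t -> G i = []).
Proof.
  induction t; intros Hn.
  - assert (Hv : forall A, exists G n0, tyj G (Var n) A n0 /\ forall i, ~ wocc i (Var n) -> G i = []).
    { intros A. exists (single n [A]), 1. split; [constructor; reflexivity|].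
      intros i Hi. unfold single. destruct (Nat.eqb_spec i n); auto. subst. exfalso; apply Hi.
      exists WHole. reflexivity. }
    split; auto.
  - split.
    + exists empty, 1. split; [constructor; reflexivity| reflexivity].
    + intros Ha. exfalso. apply Ha. exists [], t. reflexivity.
  - assert (Nt : wnormal t1) by (apply (wnormal_sub (WAppL WHole t2)); auto).
    assert (Nu : wnormal t2) by (apply (wnormal_sub (WAppR t1 WHole)); auto).
    assert (Na : ~ ans t1).
    { intros (s & b & ->). apply (Hn (plug_s s (ES b (lift 0 (length s) t2)))).
      exists WHole, (App (plug_s s (Lam b)) t2), (plug_s s (ES b (lift 0 (length s) t2))).
      split; [constructor|auto]. }
    assert (Hv : forall A, exists G n0, tyj G (App t1 t2) A n0 /\ forall i, ~ wocc i (App t1 t2) -> G i = []).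
    { intros A. destruct (proj2 (IHt1 Nt) Na (Arr [] A)) as (G1 & n1 & T1 & E1).
      destruct (proj1 (IHt2 Nu)) as (G2 & n2 & T2 & E2).
      exists (sum G1 G2), (S (n1 + n2)). split; [econstructor; [eauto | apply tys_single; eauto | reflexivity]|].
      intros i Hi. unfold sum. rewrite E1, E2; auto.
      - intros (W & HW). apply Hi. exists (WAppR t1 W). simpl. rewrite <- HW. auto.
      - intros (W & HW). apply Hi. exists (WAppL W t2). simpl. rewrite <- HW. auto. }
    split; auto.
  - assert (Nt : wnormal t1) by (apply (wnormal_sub (WESL WHole t2)); auto).
    assert (Nu : wnormal t2) by (apply (wnormal_sub (WESR t1 WHole)); auto).
    assert (No : ~ wocc 0 t1).
    { intros (W & HW). rewrite Nat.add_0_r in HW. subst t1.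
      apply (Hn (ES (plug_w W (lift 0 (S (wdepth W)) t2)) t2)).
      exists WHole, (ES (plug_w W (Var (wdepth W))) t2), (ES (plug_w W (lift 0 (S (wdepth W)) t2)) t2).
      split; [constructor|auto]. }
    destruct (proj1 (IHt2 Nu)) as (G2 & n2 & T2 & E2).
    assert (Hv : forall A n1 G1, tyj G1 t1 A n1 -> (forall i, ~ wocc i t1 -> G1 i = []) ->
       exists G n0, tyj G (ES t1 t2) A n0 /\ forall i, ~ wocc i (ES t1 t2) -> G i = []).
    { intros A n1 G1 T1 E1. exists (sum (etl G1) G2), (S (n1 + n2)). split.
      - econstructor; [ | apply tys_single; eauto | reflexivity].
        rewrite scons_tl; eauto. rewrite (E1 0 No). intro; reflexivity.
      - intros i Hi. unfold sum, etl. rewrite E1, E2; auto.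
        + intros (W & HW). apply Hi. exists (WESR t1 W). simpl. rewrite <- HW. auto.
        + intros (W & HW). apply Hi. exists (WESL W t2). simpl. rewrite HW. f_equal. f_equal. f_equal. lia. }
    split.
    + destruct (proj1 (IHt1 Nt)) as (G1 & n1 & T1 & E1). eauto.
    + intros Ha A. assert (Na : ~ ans t1).
      { intros (s & b & ->). apply Ha. exists (t2 :: s), b. reflexivity. }
      destruct (proj2 (IHt1 Nt) Na A) as (G1 & n1 & T1 & E1). eauto.
Qed.

Lemma WN_T : forall s, weakly_normalizing s -> T s.
Proof.
  intros s (v & Hv & Nv).
  assert (Tv : T v) by (destruct (proj1 (nf_ty v Nv)) as (G & n & H & _); exists G, O, n; auto).
  clear Nv. induction Hv; [ | auto | apply IHHv1, IHHv2, Tv].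
  destruct H as (W & r & r' & Hr & -> & ->). destruct Tv as (G & A & n & H).
  rewrite plug_w2c in H. destruct (c_red_gen (w2c W) r' r (root_exp r r' Hr) _ _ _ H) as (n' & H').
  exists G, A, n'. rewrite plug_w2c. auto.
Qed.

Theorem proposition7p8 :
  (forall t u : term, wstep t u -> ctx_equiv t u) /\
  (forall t u : term, ctx_equiv t u ->
     forall C : ctx, ctx_equiv (plug C t) (plug C u)).
Proof.
  split.
  - intros t u (W & r & r' & Hr & -> & ->) C _ _. rewrite !plug_w2c, <- !plug_ccomp. split.
    + intro H. destruct (WN_T _ H) as (G & A & n & T1).
      destruct (c_red_gen _ r r' (fun G A n H => let (n', P) := root_red r r' Hr G A n H in ex_intro _ n' (proj2 P)) _ _ _ T1) as (n' & T2).
      eapply T_WN; eauto.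
    + intro H. destruct (WN_T _ H) as (G & A & n & T1).
      destruct (c_red_gen _ r' r (root_exp r r' Hr) _ _ _ T1) as (n' & T2).
      eapply T_WN; eauto.
  - intros t u H C D H1 H2. rewrite <- !plug_ccomp in *. apply H; auto.
Qed.
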